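(* For every total Boolean function $f:\{0,1\}^n\to\{0,1\}$, $\lambda(f)\le\deg(f)$.
   Context: $\deg(f)$ is the degree of the unique multilinear real polynomial agreeing with $f$. The sensitivity graph $G_f$ has vertex set $\{0,1\}^n$ and an edge between $x$ and $y$ iff they differ in exactly one coordinate and $f(x)\ne f(y)$; $A_f$ is its adjacency matrix and $\lambda(f)=\|A_f\|$ (spectral norm). *)

(* Defs.v *)
From HB Require Import structures.
From mathcomp Require Import all_boot all_order all_algebra.
From mathcomp Require Import mpoly.
From mathcomp Require Import boolp classical_sets reals.

Set Implicit Arguments.
Unset Strict Implicit.
Unset Printing Implicit Defensive.

Import Order.TTheory GRing.Theory Num.Theory.
Local Open Scope ring_scope.

Definition cube (n : nat) : finType := {ffun 'I_n -> bool}.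

Definition boolfun (n : nat) := cube n -> bool.

Section Defs.
Variable R : realType.

(* The multilinear real polynomial agreeing with f on {0,1}^n:
   p_f = sum_x f(x) * prod_i (x_i ? X_i : 1 - X_i).
   It is multilinear (each variable has degree <= 1 in every monomial)
   and p_f(x) = f(x) for every x in {0,1}^n; such a polynomial is unique. *)
Definition mlpoly n (f : boolfun n) : {mpoly R[n]} :=
  \sum_(x : cube n) (f x)%:R *:
     \prod_(i < n) (if x i then 'X_i else 1 - 'X_i).

(* deg(f): total degree of the multilinear polynomial (deg of 0 is 0). *)
Definition deg n (f : boolfun n) : nat := (msize (mlpoly f)).-1.

Definition hamming1 n (x y : cube n) : bool := #|[set k | x k != y k]| == 1%N.

Definition sens_edge n (f : boolfun n) (x y : cube n) : bool :=
  hamming1 x y && (f x != f y).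

Definition sens_adj n (f : boolfun n) : 'M[R]_#|cube n| :=
  \matrix_(i, j) (sens_edge f (enum_val i) (enum_val j))%:R.

Definition enorm m (v : 'cV[R]_m) : R := Num.sqrt (\sum_i v i 0 ^+ 2).

Definition specnorm m (A : 'M[R]_m) : R :=
  sup [set enorm (A *m v) / enorm v | v in [set v : 'cV[R]_m | v != 0]].

Definition lambda n (f : boolfun n) : R := specnorm (sens_adj f).

End Defs.

(* Main.v *)
Require Import Defs.
From HB Require Import structures.
From mathcomp Require Import all_boot all_order all_algebra.
From mathcomp Require Import mpoly.
From mathcomp Require Import boolp classical_sets reals.
From mathcomp Require Import zify ring lra.
Import Order.TTheory GRing.Theory Num.Theory.
Local Open Scope ring_scope.
Set Implicit Arguments. Unset Strict Implicit. Unset Printing Implicit Defensive.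

Section Tri.
Variable R : realType.
Variable d : nat.

Definition sqw (m : nat) : R := if (m %% (4 * d) < 2 * d)%N then 1 else -1.

Lemma sum_shift1 (G : nat -> R) N : G N = G 0%N ->
  \sum_(0 <= t < N) G t.+1 = \sum_(0 <= t < N) G t.
Proof.
move=> HG.
have := @big_nat_recl R 0 (@GRing.add R) N 0 G (leq0n N).
have := @big_nat_recr R 0 (@GRing.add R) N 0 G (leq0n N).
move=> -> /eqP; rewrite HG eq_sym addrC -subr_eq => /eqP <-.
by rewrite addrK.
Qed.

Lemma sum_shift (G : nat -> R) N a : (forall m, G (m + N)%N = G m) ->
  \sum_(0 <= t < N) G (t + a)%N = \sum_(0 <= t < N) G t.
Proof.
move=> HG; elim: a => [|a IH]; first by apply: eq_bigr => t _; rewrite addn0.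
rewrite -IH -(@sum_shift1 (fun t => G (t + a)%N) N); last by rewrite add0n addnC HG.
by apply: eq_bigr => t _; rewrite addnS addSn.
Qed.

Lemma sig_per m : sqw (m + 4 * d) = sqw m.
Proof. by rewrite /sqw modnDr. Qed.

Lemma sig_val m : (m < 6 * d)%N ->
  sqw m = if (m < 2 * d)%N then 1 else if (m < 4 * d)%N then -1 else 1.
Proof.
move=> Hm; rewrite /sqw.
case: (ltnP m (4 * d)) => H4.
  by rewrite modn_small.
have -> : (m %% (4 * d) = m - 4 * d)%N.
  rewrite -{1}(subnK H4) modnDr modn_small //; lia.
have -> : (m < 2 * d)%N = false by lia.
have -> : (m - 4 * d < 2 * d)%N = true by lia.
by [].
Qed.

Lemma sig_base j : (j <= 2 * d)%N ->
  \sum_(0 <= t < 4 * d) sqw t * sqw (t + j)%N = (4 * d)%:R - (4 * j)%:R.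
Proof.
move=> Hj.
rewrite (@big_cat_nat _ _ _ (2 * d - j)) //=; last by lia.
rewrite (@big_cat_nat _ _ _ (2 * d) (2 * d - j)) //=; try lia.
rewrite (@big_cat_nat _ _ _ (4 * d - j) (2 * d)) //=; try lia.
rewrite (@eq_big_nat _ _ _ 0 (2 * d - j) _ (fun _ => 1)); last first.
  move=> t /andP[_ Ht]; rewrite !sig_val; try lia.
  have -> : (t < 2 * d)%N = true by lia.
  have -> : (t + j < 2 * d)%N = true by lia.
  by rewrite mulr1.
rewrite (@eq_big_nat _ _ _ (2 * d - j) (2 * d) _ (fun _ => -1)); last first.
  move=> t /andP[Ht1 Ht]; rewrite !sig_val; try lia.
  have -> : (t < 2 * d)%N = true by lia.
  have -> : (t + j < 2 * d)%N = false by lia.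
  have -> : (t + j < 4 * d)%N = true by lia.
  by rewrite mul1r.
rewrite (@eq_big_nat _ _ _ (2 * d) (4 * d - j) _ (fun _ => 1)); last first.
  move=> t /andP[Ht1 Ht]; rewrite !sig_val; try lia.
  have -> : (t < 2 * d)%N = false by lia.
  have -> : (t + j < 2 * d)%N = false by lia.
  have -> : (t + j < 4 * d)%N = true by lia.
  have -> : (t < 4 * d)%N = true by lia.
  by rewrite mulrNN mulr1.
rewrite (@eq_big_nat _ _ _ (4 * d - j) (4 * d) _ (fun _ => -1)); last first.
  move=> t /andP[Ht1 Ht]; rewrite !sig_val; try lia.
  have -> : (t < 2 * d)%N = false by lia.
  have -> : (t + j < 2 * d)%N = false by lia.
  have -> : (t + j < 4 * d)%N = false by lia.
  have -> : (t < 4 * d)%N = true by lia.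
  by rewrite mulN1r.
rewrite !sumr_const_nat subn0.
have -> : (2 * d - (2 * d - j) = j)%N by lia.
have -> : (4 * d - (4 * d - j) = j)%N by lia.
have e1 : (2 * d - j)%:R = 2 * d%:R - j%:R :> R.
  by rewrite natrB ?natrM; last exact: Hj.
have e2 : (4 * d - j - 2 * d)%:R = 2 * d%:R - j%:R :> R.
  have -> : (4 * d - j - 2 * d = 2 * d - j)%N by lia.
  exact: e1.
rewrite e1 e2 !mulNrn !natrM.
lra.
Qed.

Lemma sig_tri a b : (a <= b + d)%N -> (b <= a + d)%N ->
  (a%:R - b%:R) * 4 = \sum_(0 <= t < 4 * d) sqw (t + a)%N * sqw (t + (b + d))%N.
Proof.
move=> H1 H2.
set j := (b + d - a)%N.
have -> : \sum_(0 <= t < 4 * d) sqw (t + a)%N * sqw (t + (b + d))%N =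
          \sum_(0 <= t < 4 * d) (fun u => sqw u * sqw (u + j)%N) (t + a)%N.
  apply: eq_bigr => t _ /=; congr (_ * sqw _); rewrite /j; lia.
rewrite (@sum_shift (fun u => sqw u * sqw (u + j)%N) (4 * d) a); last first.
  move=> m /=; rewrite sig_per.
  have -> : (m + 4 * d + j = (m + j) + 4 * d)%N by lia.
  by rewrite sig_per.
rewrite sig_base; last by rewrite /j; lia.
rewrite /j !natrM (natrB _ H1) natrD; lra.
Qed.

End Tri.

Section Walsh.
Variable R : realType.
Variable n : nat.

Definition flipc (x : cube n) (j : 'I_n) : cube n :=
  [ffun i => if i == j then ~~ x i else x i].

Lemma flipK j : involutive (flipc ^~ j).
Proof.
move=> x; apply/ffunP => i; rewrite !ffunE.
by case: (i == j) => //; rewrite negbK.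
Qed.

Lemma flip_inj j : injective (flipc ^~ j).
Proof. exact: inv_inj (flipK j). Qed.

Definition sgn (b : bool) : R := if b then -1 else 1.

Lemma sgnN b : sgn (~~ b) = - sgn b.
Proof. by case: b; rewrite /sgn ?opprK. Qed.

Lemma sgn_sq b : sgn b * sgn b = 1.
Proof. by case: b; rewrite /sgn ?mulrNN mulr1. Qed.

Definition chi (U : {set 'I_n}) (x : cube n) : R := \prod_(i in U) sgn (x i).

Lemma chi_flip U x j : chi U (flipc x j) = (if j \in U then -1 else 1) * chi U x.
Proof.
rewrite /chi; case: ifP => jU.
  rewrite (bigD1 j jU) [in RHS](bigD1 j jU) /= ffunE eqxx sgnN mulrA mulN1r.
  congr (_ * _); apply: eq_bigr => i /andP[_ /negbTE ij].
  by rewrite ffunE ij.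
rewrite mul1r; apply: eq_bigr => i iU; rewrite ffunE.
by case: eqP => // ij; rewrite ij jU in iU.
Qed.

Lemma sum_anti (F : cube n -> R) j : (forall x, F (flipc x j) = - F x) ->
  \sum_x F x = 0.
Proof.
move=> HF.
have : \sum_x F x = - \sum_x F x.
  rewrite {1}(reindex_inj (@flip_inj j)) /= -sumrN.
  by apply: eq_bigr => x _; rewrite HF.
move=> H; lra.
Qed.

Lemma chi_sq U x : chi U x * chi U x = 1.
Proof.
rewrite /chi -big_split /=; rewrite big1 // => i _; exact: sgn_sq.
Qed.

Definition NN : R := (2 ^ n)%:R.

Lemma card_cube : #|cube n| = (2 ^ n)%N.
Proof. by rewrite /cube card_ffun card_bool card_ord. Qed.

Lemma sum_cube1 : \sum_(x : cube n) (1 : R) = NN.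
Proof. by rewrite sumr_const card_cube. Qed.

Lemma orth1 U V : \sum_x chi U x * chi V x = if U == V then NN else 0.
Proof.
case: eqP => [<-|/eqP UV].
  by rewrite -sum_cube1; apply: eq_bigr => x _; rewrite chi_sq.
have [j Hj] : exists j, (j \in U) != (j \in V).
  apply/existsP; move: UV; apply: contraR => /existsPn H.
  by apply/eqP/setP => j; move: (H j); rewrite negbK => /eqP.
apply: (@sum_anti _ j) => x; rewrite !chi_flip.
by move: Hj; case: (j \in U); case: (j \in V) => //= _;
  rewrite ?mul1r ?mulN1r ?mulrN ?mulNr.
Qed.

Lemma orth2 x y : \sum_(U : {set 'I_n}) chi U x * chi U y = if x == y then NN else 0.
Proof.
have E : forall U, chi U x * chi U y =
   \prod_i (if i \in U then sgn (x i) * sgn (y i) else 1).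
  move=> U; rewrite /chi -big_split /= big_mkcond /=.
  by apply: eq_bigr => i _.
under eq_bigr => U _ do rewrite E.
rewrite -(@bigA_distr R 0 1 *%R +%R) /=.
case: eqP => [<-|/eqP xy].
  rewrite /NN natrX; under eq_bigr => i _ do rewrite sgn_sq.
  by rewrite prodr_const card_ord.
have [j Hj] : exists j, x j != y j.
  apply/existsP; move: xy; apply: contraR => /existsPn H.
  by apply/eqP/ffunP => j; move: (H j); rewrite negbK => /eqP.
rewrite (bigD1 j) //= [_ + _](_ : _ = 0) ?mul0r //.
by move: Hj; case: (x j); case: (y j) => //= _; rewrite /sgn ?mulN1r ?mul1r;
  rewrite ?addNr ?subrr.
Qed.

End Walsh.

Section Core.
Variable R : realType.
Variable n : nat.
Variable f : boolfun n.
Variable d : nat.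

Definition gg (x : cube n) : R := sgn R (f x).

Definition KK (v : cube n -> R) (x : cube n) : R :=
  \sum_j (gg x - gg (flipc x j)) / 2 * v (flipc x j).

Definition hat (u : cube n -> R) (U : {set 'I_n}) : R := \sum_x u x * chi R U x.

Definition GG (S T : {set 'I_n}) : R := \sum_x chi R S x * gg x * chi R T x.

Lemma NN_neq0 : NN R n != 0.
Proof. by rewrite /NN pnatr_eq0 -lt0n expn_gt0. Qed.

Lemma inv_hat (u : cube n -> R) x :
  u x = (NN R n)^-1 * \sum_U hat u U * chi R U x.
Proof.
have -> : \sum_U hat u U * chi R U x = \sum_y u y * (\sum_U chi R U y * chi R U x).
  rewrite /hat; under eq_bigr => U _ do rewrite mulr_suml.
  rewrite exchange_big /=; apply: eq_bigr => y _.
  by rewrite mulr_sumr; apply: eq_bigr => U _; rewrite mulrA.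
under eq_bigr => y _ do rewrite orth2.
rewrite (bigD1 x) //= eqxx big1 ?addr0; last first.
  by move=> y /negbTE ->; rewrite mulr0.
by rewrite mulrCA mulVf ?mulr1 // NN_neq0.
Qed.

Lemma KK_ext v w x : (forall y, v y = w y) -> KK v x = KK w x.
Proof. by move=> H; apply: eq_bigr => j _; rewrite H. Qed.

Lemma KK_lin (c : {set 'I_n} -> R) x :
  KK (fun y => \sum_T c T * chi R T y) x = \sum_T c T * KK (chi R T) x.
Proof.
rewrite /KK; under eq_bigr => j _ do rewrite mulr_sumr.
rewrite exchange_big /=; apply: eq_bigr => T _.
by rewrite mulr_sumr; apply: eq_bigr => j _; rewrite mulrCA.
Qed.

Definition ee (T : {set 'I_n}) (j : 'I_n) : R := if j \in T then -1 else 1.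

Lemma sum_ee (T : {set 'I_n}) :
  \sum_(j : 'I_n) ee T j = n%:R - 2 * #|T|%:R.
Proof.
rewrite (bigID (mem T)) /=.
rewrite (eq_bigr (fun _ => -1)); last by move=> j; rewrite /ee => ->.
rewrite [X in _ + X](eq_bigr (fun _ => 1)); last by move=> j; rewrite /ee => /negbTE ->.
rewrite !sumr_const.
have H : (n%:R : R) = #|T|%:R + #|~: T|%:R.
  by rewrite -natrD cardsC card_ord.
have -> : #|[pred i | i \in T]| = #|T| by apply: eq_card.
have -> : #|[pred i | i \notin T]| = #|~: T| by apply: eq_card => i; rewrite inE finset.in_setC.
rewrite H mulNrn; lra.
Qed.

Lemma KE (S T : {set 'I_n}) :
  \sum_x chi R S x * KK (chi R T) x = (#|S|%:R - #|T|%:R) * GG S T.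
Proof.
have A : forall j, \sum_x chi R S x * ((gg x - gg (flipc x j)) / 2 * chi R T (flipc x j))
           = (ee T j - ee S j) / 2 * GG S T.
  move=> j.
  have -> : \sum_x chi R S x * ((gg x - gg (flipc x j)) / 2 * chi R T (flipc x j)) =
     \sum_x (ee T j / 2 * (chi R S x * gg x * chi R T x)
            - ee T j / 2 * (chi R S x * gg (flipc x j) * chi R T x)).
    apply: eq_bigr => x _; rewrite chi_flip -/(ee T j). ring.
  rewrite sumrB -!mulr_sumr.
  have -> : \sum_x chi R S x * gg (flipc x j) * chi R T x = ee S j * ee T j * GG S T.
    rewrite [LHS](reindex_inj (@flip_inj n j)) /GG mulr_sumr; apply: eq_bigr => x _.
    rewrite flipK !chi_flip -/(ee S j) -/(ee T j); ring.
  rewrite -/(GG S T).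
  rewrite /ee; case: (j \in S); case: (j \in T); lra.
rewrite /KK; under eq_bigr => x _ do rewrite mulr_sumr.
rewrite exchange_big /=.
under eq_bigr => j _ do rewrite A.
rewrite -mulr_suml -mulr_suml sumrB !sum_ee; lra.
Qed.

Lemma bil (I K : finType) (a b : I -> R) (P Q : I -> K -> R) :
  \sum_k (\sum_i a i * P i k) * (\sum_i b i * Q i k) =
  \sum_i \sum_j a i * b j * \sum_k P i k * Q j k.
Proof.
under eq_bigr => k _ do rewrite big_distrlr /=.
rewrite exchange_big /=; apply: eq_bigr => i _.
rewrite exchange_big /=; apply: eq_bigr => j _.
by rewrite mulr_sumr; apply: eq_bigr => k _; ring.
Qed.

Lemma pars_hat (u : cube n -> R) :
  \sum_U hat u U ^+ 2 = NN R n * \sum_x u x ^+ 2.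
Proof.
have := @bil _ _ u u (fun x U => chi R U x) (fun x U => chi R U x).
under eq_bigr => k _ do rewrite -/(hat u k).
under [X in _ = X -> _]eq_bigr => i _ do under eq_bigr => j _ do rewrite orth2.
move=> ->; rewrite mulr_sumr; apply: eq_bigr => x _.
rewrite (bigD1 x) //= eqxx big1 ?addr0; last first.
  by move=> y /negbTE; rewrite eq_sym => ->; rewrite mulr0.
by rewrite expr2 mulrC.
Qed.

Lemma pars_chk (a : {set 'I_n} -> R) :
  \sum_x (\sum_U a U * chi R U x) ^+ 2 = NN R n * \sum_U a U ^+ 2.
Proof.
under eq_bigr => x _ do rewrite expr2.
rewrite (@bil _ _ a a (@chi R n) (@chi R n)).
under eq_bigr => U _ do under eq_bigr => V _ do rewrite orth1.
rewrite mulr_sumr; apply: eq_bigr => U _.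
rewrite (bigD1 U) //= eqxx big1 ?addr0; last first.
  by move=> V /negbTE; rewrite eq_sym => ->; rewrite mulr0.
by rewrite expr2 mulrC.
Qed.

Lemma amgm (a b g c : R) : 0 < c -> g * g = 1 ->
  2 * (a * g * b) <= c * a ^+ 2 + c^-1 * b ^+ 2.
Proof.
move=> c0 gg1.
have ci : c * c^-1 = 1 by rewrite mulfV // gt_eqF.
have h : 0 <= c^-1 * (c * a - g * b) ^+ 2 by rewrite mulr_ge0 ?sqr_ge0 // invr_ge0 ltW.
have E : c^-1 * (c * a - g * b) ^+ 2 =
   (c * c^-1) * (c * a ^+ 2) - 2 * (c * c^-1) * (a * g * b) + c^-1 * ((g * g) * b ^+ 2).
  ring.
rewrite E ci gg1 !mul1r in h; lra.
Qed.

Lemma gg_sq x : gg x * gg x = 1.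
Proof. exact: sgn_sq. Qed.

Lemma step1 (u v : cube n -> R) :
  \sum_x u x * KK v x = (NN R n)^-1 * (NN R n)^-1 *
     \sum_S \sum_T hat u S * hat v T * ((#|S|%:R - #|T|%:R) * GG S T).
Proof.
have Ev : forall x, KK v x = \sum_T ((NN R n)^-1 * hat v T) * KK (chi R T) x.
  move=> x; rewrite -KK_lin; apply: KK_ext => y.
  by rewrite inv_hat mulr_sumr; apply: eq_bigr => T _; rewrite mulrA.
have Eu : forall x, u x = \sum_S ((NN R n)^-1 * hat u S) * chi R S x.
  by move=> x; rewrite inv_hat mulr_sumr; apply: eq_bigr => T _; rewrite mulrA.
under eq_bigr => x _ do rewrite Ev Eu.
rewrite (@bil _ _ _ _ (@chi R n) (fun T x => KK (chi R T) x)).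
rewrite [RHS]mulr_sumr; apply: eq_bigr => S _.
rewrite [RHS]mulr_sumr; apply: eq_bigr => T _.
rewrite KE; ring.
Qed.

Hypothesis HG : forall S T, GG S T != 0 ->
  (#|S| <= #|T| + d)%N && (#|T| <= #|S| + d)%N.

Lemma step2 (S T : {set 'I_n}) : (#|S|%:R - #|T|%:R) * GG S T =
  4^-1 * \sum_(0 <= t < 4 * d) sqw R d (t + #|S|)%N * sqw R d (t + (#|T| + d))%N * GG S T.
Proof.
have [->|/HG /andP[H1 H2]] := eqVneq (GG S T) 0.
  by rewrite mulr0 big1 ?mulr0 // => t _; rewrite mulr0.
rewrite -mulr_suml -(sig_tri R H1 H2); by field.
Qed.

Lemma step3 (a b : {set 'I_n} -> R) :
  \sum_S \sum_T a S * b T * GG S T =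
  \sum_x (\sum_S a S * chi R S x) * gg x * (\sum_T b T * chi R T x).
Proof.
have := @bil _ _ a b (fun S x => chi R S x * gg x) (@chi R n).
move=> <-; apply: eq_bigr => x _.
rewrite [in RHS]mulr_suml; congr (_ * _); apply: eq_bigr => S _; by rewrite mulrA.
Qed.

Lemma sig_sq m : sqw R d m * sqw R d m = 1.
Proof. by rewrite /sqw; case: ifP => _; rewrite ?mulrNN mulr1. Qed.

Lemma step4 (u : cube n -> R) (s : {set 'I_n} -> R) : (forall S, s S * s S = 1) ->
  \sum_x (\sum_S (s S * hat u S) * chi R S x) ^+ 2 =
  NN R n * (NN R n * \sum_x u x ^+ 2).
Proof.
move=> hs; rewrite pars_chk -pars_hat; congr (_ * _).
by apply: eq_bigr => S _; rewrite !expr2 mulrACA hs mul1r.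
Qed.

Lemma main (u v : cube n -> R) (c : R) : 0 < c ->
  2 * \sum_x u x * KK v x <=
  d%:R * (c * \sum_x u x ^+ 2 + c^-1 * \sum_x v x ^+ 2).
Proof.
move=> c0.
set N := NN R n.
set Su := \sum_x u x ^+ 2.
set Sv := \sum_x v x ^+ 2.
set B0 := c * (N * (N * Su)) + c^-1 * (N * (N * Sv)).
set X := fun t : nat => \sum_(x : cube n) (\sum_(S : {set 'I_n}) (sqw R d (t + #|S|)%N * hat u S) * chi R S x) * gg x *
      (\sum_(T : {set 'I_n}) (sqw R d (t + (#|T| + d))%N * hat v T) * chi R T x).
have E : \sum_x u x * KK v x = N^-1 * N^-1 * (4^-1 * \sum_(0 <= t < 4 * d) X t).
  rewrite step1; congr (_ * _).
  under eq_bigr => S _ do under eq_bigr => T _ do rewrite step2.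
  rewrite [RHS]mulr_sumr /X.
  rewrite [RHS](eq_bigr (fun t => \sum_(S : {set 'I_n}) \sum_(T : {set 'I_n})
     4^-1 * ((sqw R d (t + #|S|)%N * hat u S) * (sqw R d (t + (#|T| + d))%N * hat v T) * GG S T))); last first.
    move=> t _.
    rewrite -(step3 (fun S => sqw R d (t + #|S|)%N * hat u S) (fun T => sqw R d (t + (#|T| + d))%N * hat v T)).
    rewrite mulr_sumr; apply: eq_bigr => S _.
    by rewrite mulr_sumr.
  rewrite [RHS]exchange_big /=; apply: eq_bigr => S _.
  rewrite [RHS]exchange_big /=; apply: eq_bigr => T _.
  rewrite (mulr_sumr _ _ _ 4^-1) (mulr_sumr _ _ _ (hat u S * hat v T)); apply: eq_bigr => t _.
  ring.
have Bt : forall t, 2 * X t <= B0.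
  move=> t; rewrite /X /B0 mulr_sumr.
  rewrite -(step4 u (fun S => sig_sq (t + #|S|)%N)).
  rewrite -(step4 v (fun T => sig_sq (t + (#|T| + d))%N)).
  rewrite !mulr_sumr -big_split /=; apply: ler_sum => x _.
  exact: amgm c0 (gg_sq x).
have Bs : 2 * \sum_(0 <= t < 4 * d) X t <= (4 * d)%:R * B0.
  rewrite mulr_sumr.
  apply: (le_trans (ler_sum _ (fun t _ => Bt t))).
  by rewrite sumr_const_nat subn0 mulr_natl.
have N0 : 0 < N by rewrite /N /NN ltr0n expn_gt0.
rewrite E.
have -> : 2 * (N^-1 * N^-1 * (4^-1 * \sum_(0 <= t < 4 * d) X t)) =
          (N^-1 * N^-1 * 4^-1) * (2 * \sum_(0 <= t < 4 * d) X t) by ring.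
apply: (le_trans (ler_wpM2l _ Bs)).
  by rewrite !mulr_ge0 // ?invr_ge0 ?ltW.
rewrite /B0 natrM.
have NN1 : N^-1 * N^-1 * (N * N) = 1.
  by rewrite mulrACA mulVf ?mul1r // gt_eqF.
have E2 : N^-1 * N^-1 * 4^-1 * (4%:R * d%:R * (c * (N * (N * Su)) + c^-1 * (N * (N * Sv))))
   = (N^-1 * N^-1 * (N * N)) * (4^-1 * 4%:R) * (d%:R * (c * Su + c^-1 * Sv)) by ring.
rewrite E2 NN1 mulVf ?mul1r //.
by rewrite pnatr_eq0.
Qed.

End Core.

Section Deg.
Variable R : realType.
Variable n : nat.
Variable f : boolfun n.

Lemma mlpoly_eval (x : cube n) : (mlpoly R f).@[fun i => (x i)%:R] = (f x)%:R.
Proof.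
rewrite /mlpoly raddf_sum /= (bigD1 x) //= [X in _ + X]big1.
  rewrite addr0 mevalZ rmorph_prod /= big1 ?mulr1 // => i _.
  by case Hxi: (x i); rewrite ?mevalXU ?mevalB ?meval1 ?mevalXU Hxi /= ?mulr1n ?mulr0n ?subr0.
move=> y yx; rewrite mevalZ rmorph_prod /=.
have [i Hi] : exists i, y i != x i.
  apply/existsP; move: yx; apply: contraR => /existsPn H.
  by apply/eqP/ffunP => i; move: (H i); rewrite negbK => /eqP.
rewrite (bigD1 i) //=.
by move: Hi; case Hy: (y i); case Hx: (x i) => //= _;
  rewrite ?mevalXU ?mevalB ?meval1 ?mevalXU ?Hx /= ?mulr1n ?mulr0n ?subrr ?mul0r ?mulr0.
Qed.

Lemma deg_zero (P : cube n -> R) :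
  (forall m, m \in msupp (mlpoly R f) ->
     exists j, (m j = 0)%N /\ forall x, P (flipc x j) = - P x) ->
  \sum_x (f x)%:R * P x = 0.
Proof.
move=> HP.
under eq_bigr => x _ do rewrite -mlpoly_eval mevalE mulr_suml.
rewrite exchange_big /= big1_seq // => m /andP[_ mm].
have [j [mj Hj]] := HP m mm.
apply: (@sum_anti R n _ j) => x; rewrite Hj mulrN; congr (- (_ * _)); congr (_ * _).
apply: eq_bigr => i _; rewrite ffunE.
case: eqP => [->|//]; by rewrite mj !expr0.
Qed.

Lemma exj (A B : {set 'I_n}) (m : 'X_{1.. n}) : (#|B| + mdeg m < #|A|)%N ->
  exists j, [&& j \in A, j \notin B & m j == 0%N].
Proof.
move=> H; case: (boolP [exists j, [&& j \in A, j \notin B & m j == 0%N]]) => [/existsP //|/existsPn Hn].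
exfalso.
have h1 : (#|A :\: B| <= mdeg m)%N.
  rewrite mdegE -sum1_card (bigID (mem (A :\: B)) predT (fun j => m j)) /=.
  apply: leq_trans (leq_addr _ _).
  apply: leq_sum => j jAB; rewrite lt0n.
  move: (Hn j); rewrite finset.in_setD in jAB; case/andP: jAB => -> ->.
  by rewrite /=.
have h2 : (#|A| <= #|A :\: B| + #|B|)%N.
  rewrite -(cardsID B A) addnC leq_add2l; apply: subset_leq_card; exact: subsetIr.
lia.
Qed.

Lemma GG_zero (S T : {set 'I_n}) :
  (#|T| + deg R f < #|S|)%N || (#|S| + deg R f < #|T|)%N -> @GG R n f S T = 0.
Proof.
move=> Hc.
have ST : S != T by apply/eqP => E; move: Hc; rewrite E; lia.
have E : @GG R n f S T = \sum_x chi R S x * chi R T x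
                    - 2 * \sum_x (f x)%:R * (chi R S x * chi R T x).
  rewrite mulr_sumr -sumrB; apply: eq_bigr => x _.
  rewrite /gg /sgn; case: (f x) => /=; rewrite ?mulr1n ?mulr0n; ring.
rewrite E orth1 (negbTE ST) deg_zero ?mulr0 ?subrr //.
move=> m mm.
have md : (mdeg m <= deg R f)%N.
  have := msize_mdeg_lt mm; rewrite /deg; lia.
case/orP: Hc => Hc.
  have [j /and3P[jS jT /eqP mj]] := @exj S T m ltac:(lia).
  exists j; split => // x; rewrite !chi_flip jS (negbTE jT); ring.
have [j /and3P[jT jS /eqP mj]] := @exj T S m ltac:(lia).
exists j; split => // x; rewrite !chi_flip jT (negbTE jS); ring.
Qed.

Lemma HGdeg (S T : {set 'I_n}) : @GG R n f S T != 0 ->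
  (#|S| <= #|T| + deg R f)%N && (#|T| <= #|S| + deg R f)%N.
Proof.
apply: contraR; rewrite negb_and -!ltnNge => H.
by rewrite GG_zero.
Qed.

End Deg.

Section Final.
Variable R : realType.
Variable n : nat.
Variable f : boolfun n.

Lemma flip_set (x y : cube n) j :
  (y == flipc x j) = ([set k | x k != y k] == [set j]).
Proof.
apply/eqP/eqP => [->|H].
  apply/setP => k; rewrite !inE ffunE.
  by case kj: (k == j); rewrite ?eqxx //; case: (x k).
apply/ffunP => k; rewrite ffunE.
move/setP: H => /(_ k); rewrite !inE.
by case: (k == j); case: (x k); case: (y k).
Qed.

Lemma sum_neighbors (x : cube n) (H : cube n -> R) :
  \sum_y (hamming1 x y)%:R * H y = \sum_j H (flipc x j).
Proof.
have -> : \sum_j H (flipc x j) = \sum_j \sum_y (y == flipc x j)%:R * H y.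
  apply: eq_bigr => j _; rewrite (bigD1 (flipc x j)) //= eqxx mul1r big1 ?addr0 //.
  by move=> y /negbTE ->; rewrite mul0r.
rewrite exchange_big /=; apply: eq_bigr => y _; rewrite -mulr_suml; congr (_ * _).
under eq_bigr => j _ do rewrite flip_set.
rewrite /hamming1; set D := [set k | x k != y k].
case: (boolP (#|D| == 1%N)) => [/cards1P [j0 ->]|HD].
  rewrite (bigD1 j0) //= eqxx big1 ?addr0 //.
  move=> j jj; case: eqP => [/set1_inj E|_]; last by rewrite mulr0n.
  by rewrite E eqxx in jj.
rewrite big1 ?mulr0n // => j _.
case: eqP => [E|_]; last by rewrite mulr0n.
by move: HD; rewrite E cards1 eqxx.
Qed.

Lemma natr_andb (a b : bool) : ((a && b)%:R : R) = a%:R * b%:R.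
Proof. by case: a; case: b; rewrite /= ?mulr1n ?mulr0n ?mul1r ?mul0r. Qed.

Lemma adj_KK (v : cube n -> R) (x : cube n) :
  \sum_y (sens_edge f x y)%:R * v y = @gg R n f x * @KK R n f v x.
Proof.
rewrite /sens_edge.
under eq_bigr => y _ do rewrite natr_andb -mulrA.
rewrite sum_neighbors /KK mulr_sumr; apply: eq_bigr => j _.
rewrite mulrA; congr (_ * _).
rewrite /gg /sgn; case: (f x); case: (f (flipc x j)) => /=; rewrite ?mulr1n ?mulr0n; lra.
Qed.

Lemma sum_enum (F : 'I_#|cube n| -> R) : \sum_i F i = \sum_x F (enum_rank x).
Proof.
have hb : {on predT, bijective (@enum_rank (cube n))}.
  apply: onW_bij; exists enum_val; [exact: enum_rankK | exact: enum_valK].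
by rewrite (reindex _ hb).
Qed.

Lemma adj_bound (v : 'cV[R]_#|cube n|) :
  \sum_i ((sens_adj R f *m v) i 0) ^+ 2 <= (deg R f)%:R ^+ 2 * \sum_i (v i 0) ^+ 2.
Proof.
set vf := fun x : cube n => v (enum_rank x) 0.
set d := deg R f.
have HA : forall x, (sens_adj R f *m v) (enum_rank x) 0 = @gg R n f x * @KK R n f vf x.
  move=> x; rewrite mxE -adj_KK sum_enum; apply: eq_bigr => y _.
  by rewrite /sens_adj mxE !enum_rankK.
have SA : \sum_i ((sens_adj R f *m v) i 0) ^+ 2 = \sum_x (@KK R n f vf x) ^+ 2.
  rewrite sum_enum; apply: eq_bigr => x _; rewrite HA exprMn.
  by rewrite expr2 gg_sq mul1r.
have SV : \sum_i (v i 0) ^+ 2 = \sum_x vf x ^+ 2 by rewrite sum_enum.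
rewrite SA SV.
set Q := \sum_x (@KK R n f vf x) ^+ 2.
set V := \sum_x vf x ^+ 2.
have Q0 : 0 <= Q by apply: sumr_ge0 => x _; exact: sqr_ge0.
have V0 : 0 <= V by apply: sumr_ge0 => x _; exact: sqr_ge0.
have M : forall c, 0 < c -> 2 * Q <= d%:R * (c * Q + c^-1 * V).
  move=> c c0; have := @main R n f d (@HGdeg R n f) (@KK R n f vf) vf c c0.
  have -> : Q = \sum_x @KK R n f vf x * @KK R n f vf x.
    by apply: eq_bigr => x _; rewrite expr2.
  by [].
case: (posnP d) => [d0|dpos].
  have H := M 1 ltr01; rewrite d0 mulr0n mul0r in H.
  rewrite d0 mulr0n expr0n /= mul0r; lra.
have dR : 0 < d%:R :> R by rewrite ltr0n.
have dI : 0 < d%:R^-1 :> R by rewrite invr_gt0.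
have := M (d%:R^-1) dI; rewrite invrK => H.
have E : d%:R * (d%:R^-1 * Q + d%:R * V) = (d%:R * d%:R^-1) * Q + d%:R ^+ 2 * V.
  ring.
rewrite E mulfV ?mul1r in H; last by rewrite gt_eqF.
lra.
Qed.

End Final.

Unset Implicit Arguments.

Theorem theorem4p1 (R : realType) (n : nat) (f : boolfun n) :
  lambda R f <= (deg R f)%:R.
Proof.
rewrite /lambda /specnorm.
apply: ge_sup.
  pose x0 : cube n := [ffun=> false].
  pose v0 : 'cV[R]_#|cube n| := const_mx 1.
  have v0n : v0 != 0.
    apply/eqP => /matrixP /(_ (enum_rank x0) 0); rewrite !mxE => /eqP.
    by rewrite oner_eq0.
  by exists (enorm (sens_adj R f *m v0) / enorm v0); exists v0.
move=> _ [v /= vne <-].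
set d := deg R f.
have B := adj_bound f v.
rewrite /enorm.
set SA := \sum_i _.
set SV := \sum_i _.
have SV0 : 0 <= SV by apply: sumr_ge0 => i _; exact: sqr_ge0.
have d0 : 0 <= d%:R :> R by exact: ler0n.
case: (eqVneq (Num.sqrt SV) 0) => [->|nz].
  by rewrite invr0 mulr0.
have pos : 0 < Num.sqrt SV by rewrite lt_def nz sqrtr_ge0.
rewrite ler_pdivrMr // -[d%:R]ger0_norm // -sqrtr_sqr -sqrtrM ?sqr_ge0 //.
by rewrite ler_sqrt // mulr_ge0 // sqr_ge0.
Qed.
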